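(* Let $X$ be a complete metric space, let $f:X\to\mathbb{R}\cup\{+\infty\}$ be a lower semicontinuous function, let $r_0>0$, $k>0$, and let $\varphi\in\mathcal{K}(0,r_0)$. The following assertions are equivalent: (i) the multivalued mapping $X\rightrightarrows\mathbb{R}$, $x\mapsto[(\varphi\circ f)(x),+\infty)$, is $k$-metrically regular on $[0<f<r_0]\times(0,\varphi(r_0))$; (ii) for all $r_1,r_2\in(0,r_0)$, $\operatorname{Dist}([f\le r_1],[f\le r_2])\le k\,|\varphi(r_1)-\varphi(r_2)|$; (iii) for all $x\in[0<f<r_0]$, $|\nabla(\varphi\circ f)|(x)\ge\frac1k$.
   Context: $\mathcal{K}(0,r_0)$ is the set of functions $\varphi\in C([0,r_0))\cap C^1(0,r_0)$ with $\varphi(0)=0$ and $\varphi'(r)>0$ for all $r\in(0,r_0)$; $\varphi(r_0)$ denotes $\lim_{r\uparrow r_0}\varphi(r)\in(0,+\infty]$. Notation: $[r_1<f<r_2]=\{x:r_1<f(x)<r_2\}$, $[f\le r]=\{x:f(x)\le r\}$. $\operatorname{dist}(x,S)=\inf_{y\in S}d(x,y)$; the Hausdorff distance is $\operatorname{Dist}(S_1,S_2)=\max\{\sup_{x\in S_1}\operatorname{dist}(x,S_2),\sup_{x\in S_2}\operatorname{dist}(x,S_1)\}$ (possibly $+\infty$). A multivalued map $F:X\rightrightarrows Y$ is $k$-metrically regular at $(\bar x,\bar y)\in\operatorname{Graph}F$ if there exist $\varepsilon,\delta>0$ with $\operatorname{dist}(x,F^{-1}(y))\le k\operatorname{dist}(y,F(x))$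 for all $(x,y)\in B(\bar x,\varepsilon)\times B(\bar y,\delta)$, where $F^{-1}(y)=\{x:y\in F(x)\}$; it is $k$-metrically regular on $V$ if it is so at every point of $\operatorname{Graph}F\cap V$. Strong slope: $|\nabla g|(x)=\limsup_{y\to x}\frac{(g(x)-g(y))^+}{d(x,y)}$, $a^+=\max\{a,0\}$. *)

(* Defs.v *)
From Stdlib Require Import Reals.
From Coquelicot Require Export Coquelicot.
Open Scope R_scope.

Section Defs.
Variable X : Type.
Variable d : X -> X -> R.

Definition is_metric : Prop :=
  (forall x y, 0 <= d x y) /\
  (forall x y, d x y = 0 <-> x = y) /\
  (forall x y, d x y = d y x) /\
  (forall x y z, d x z <= d x y + d y z).

Definition complete_metric : Prop :=
  forall u : nat -> X,
    (forall eps, 0 < eps -> exists N, forall m n, (N <= m)%nat -> (N <= n)%nat ->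
        d (u m) (u n) < eps) ->
    exists l, forall eps, 0 < eps -> exists N, forall n, (N <= n)%nat -> d (u n) l < eps.

Definition no_minus_infty (f : X -> Rbar) : Prop := forall x, f x <> m_infty.

Definition lsc (f : X -> Rbar) : Prop :=
  forall x (a : R), Rbar_lt a (f x) ->
    exists delta, 0 < delta /\ forall y, d x y < delta -> Rbar_lt a (f y).

(* dist(x,S) = inf_{z in S} d(x,z)  (= +oo if S is empty) *)
Definition distX (x : X) (S : X -> Prop) : Rbar :=
  Rbar_glb (fun t => exists z, S z /\ t = Finite (d x z)).

(* Hausdorff distance Dist(S1,S2) = max of the two sups (possibly +oo) *)
Definition HausDist (S1 S2 : X -> Prop) : Rbar :=
  Rbar_lub (fun s =>
    s = Rbar_lub (fun t => exists x, S1 x /\ t = distX x S2) \/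
    s = Rbar_lub (fun t => exists x, S2 x /\ t = distX x S1)).

(* (a - b)^+ for a, b in R U {+oo, -oo} (the case oo - oo never matters) *)
Definition Rbar_pos_diff (a b : Rbar) : Rbar :=
  match a, b with
  | Finite a, Finite b => Finite (Rmax 0 (a - b))
  | Finite _, p_infty => Finite 0
  | Finite _, m_infty => p_infty
  | p_infty, Finite _ => p_infty
  | p_infty, m_infty => p_infty
  | p_infty, p_infty => Finite 0
  | m_infty, _ => Finite 0
  end.

(* strong slope |grad g|(x) = limsup_{y -> x} (g x - g y)^+ / d(x,y)
   = inf_{delta>0} sup_{0 < d(x,y) < delta} ...   (= 0 at isolated points) *)
Definition strong_slope (g : X -> Rbar) (x : X) : Rbar :=
  Rbar_glb (fun s => exists delta, 0 < delta /\
    s = Rbar_lub (fun t => t = Finite 0 \/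
          exists y, 0 < d x y < delta /\
                    t = Rbar_mult (Rbar_pos_diff (g x) (g y)) (Finite (/ d x y)))).

Definition distR (y : R) (A : R -> Prop) : Rbar :=
  Rbar_glb (fun t => exists z, A z /\ t = Finite (Rabs (y - z))).

(* multivalued map F : X ⇉ R, given as F x y <-> y ∈ F(x) *)
Definition metric_regular_at (F : X -> R -> Prop) (k : R) (xb : X) (yb : R) : Prop :=
  exists eps delta, 0 < eps /\ 0 < delta /\
    forall x y, d x xb < eps -> Rabs (y - yb) < delta ->
      Rbar_le (distX x (fun z => F z y)) (Rbar_mult (Finite k) (distR y (F x))).

Definition metric_regular_on (F : X -> R -> Prop) (k : R) (V : X -> R -> Prop) : Prop :=
  forall x y, F x y -> V x y -> metric_regular_at F k x y.

End Defs.

Definition in_K (r0 : R) (phi : R -> R) : Prop :=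
  (forall t, 0 <= t < r0 -> forall eps, 0 < eps -> exists delta, 0 < delta /\
      forall s, 0 <= s < r0 -> Rabs (s - t) < delta -> Rabs (phi s - phi t) < eps) /\
  (exists phi' : R -> R,
      (forall t, 0 < t < r0 -> is_derive phi t (phi' t)) /\
      (forall t, 0 < t < r0 -> continuous phi' t) /\
      (forall t, 0 < t < r0 -> 0 < phi' t)) /\
  phi 0 = 0.

(* phi(r0) := lim_{r -> r0^-} phi r, in (0,+oo] *)
Definition left_limit_at (phi : R -> R) (r0 : R) (L : Rbar) : Prop :=
  filterlim phi (at_left r0) (Rbar_locally L).

(* phi ∘ f, with the conventions: phi ∘ f = +oo where f >= r0 (incl. f = +oo),
   and phi ∘ f = f where f < 0 (any value <= 0 gives the same theorem). *)
Definition phi_comp {X : Type} (phi : R -> R) (r0 : R) (f : X -> Rbar) (x : X) : Rbar :=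
  match f x with
  | Finite t => if Rlt_dec t 0 then Finite t
                else if Rlt_dec t r0 then Finite (phi t) else p_infty
  | p_infty => p_infty
  | m_infty => m_infty
  end.

Definition epi_map {X : Type} (phi : R -> R) (r0 : R) (f : X -> Rbar) : X -> R -> Prop :=
  fun x y => Rbar_le (phi_comp phi r0 f x) (Finite y).

Definition sublevel {X : Type} (f : X -> Rbar) (r : R) : X -> Prop :=
  fun x => Rbar_le (f x) (Finite r).

(* Main.v *)
Require Import Defs.
From Stdlib Require Import Reals Lra Lia Classical ClassicalEpsilon.
From Coquelicot Require Import Coquelicot.
Open Scope R_scope.

Lemma lub_spec (E : Rbar -> Prop) : Rbar_is_lub E (Rbar_lub E).
Proof. unfold Rbar_lub. destruct (Rbar_ex_lub E) as [l Hl]. exact Hl. Qed.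
Lemma glb_spec (E : Rbar -> Prop) : Rbar_is_glb E (Rbar_glb E).
Proof. unfold Rbar_glb. destruct (Rbar_ex_glb E) as [l Hl]. exact Hl. Qed.

Lemma le_lub (E : Rbar -> Prop) x : E x -> Rbar_le x (Rbar_lub E).
Proof. intros H. apply (proj1 (lub_spec E)). exact H. Qed.
Lemma lub_le (E : Rbar -> Prop) b : (forall x, E x -> Rbar_le x b) -> Rbar_le (Rbar_lub E) b.
Proof. intros H. apply (proj2 (lub_spec E)). exact H. Qed.
Lemma glb_le (E : Rbar -> Prop) x : E x -> Rbar_le (Rbar_glb E) x.
Proof. intros H. apply (proj1 (glb_spec E)). exact H. Qed.
Lemma le_glb (E : Rbar -> Prop) b : (forall x, E x -> Rbar_le b x) -> Rbar_le b (Rbar_glb E).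
Proof. intros H. apply (proj2 (glb_spec E)). exact H. Qed.

Lemma lt_lub (E : Rbar -> Prop) b : Rbar_lt b (Rbar_lub E) -> exists x, E x /\ Rbar_lt b x.
Proof.
  intros H. apply NNPP. intros Hn.
  assert (Rbar_le (Rbar_lub E) b).
  { apply lub_le. intros x Ex. apply Rbar_not_lt_le. intros Hl. apply Hn. exists x; auto. }
  apply (Rbar_lt_not_le _ _ H H0).
Qed.
Lemma glb_lt (E : Rbar -> Prop) b : Rbar_lt (Rbar_glb E) b -> exists x, E x /\ Rbar_lt x b.
Proof.
  intros H. apply NNPP. intros Hn.
  assert (Rbar_le b (Rbar_glb E)).
  { apply le_glb. intros x Ex. apply Rbar_not_lt_le. intros Hl. apply Hn. exists x; auto. }
  apply (Rbar_lt_not_le _ _ H H0).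
Qed.

Lemma lub_ge (E : Rbar -> Prop) (B : R) :
  (forall m, m < B -> exists t, E t /\ Rbar_le (Finite m) t) -> Rbar_le (Finite B) (Rbar_lub E).
Proof.
  intros H. apply Rbar_not_lt_le. intros Hl.
  destruct (Rbar_lub E) as [L| |] eqn:HL; simpl in Hl.
  - destruct (H ((L+B)/2)) as [t [Et Ht]]. lra.
    assert (Rbar_le t (Finite L)) by (rewrite <- HL; apply le_lub; auto).
    pose proof (Rbar_le_trans _ _ _ Ht H0). simpl in H1. lra.
  - contradiction.
  - destruct (H (B - 1)) as [t [Et Ht]]. lra.
    assert (Rbar_le t m_infty) by (rewrite <- HL; apply le_lub; auto).
    pose proof (Rbar_le_trans _ _ _ Ht H0). simpl in H1. contradiction.
Qed.

Lemma mult_le (k : R) A B : 0 < k -> Rbar_le A (Finite B) -> Rbar_le (Rbar_mult (Finite k) A) (Finite (k*B)).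
Proof.
  intros Hk HA. destruct A as [a| |]; simpl in HA |- *.
  - apply Rmult_le_compat_l; lra.
  - contradiction.
  - unfold Rbar_mult; simpl. destruct (Rle_dec 0 k); [|lra].
    destruct (Rle_lt_or_eq_dec 0 k r); simpl; auto. lra.
Qed.

Lemma mult_ge (k : R) A B : 0 < k -> Rbar_le (Finite B) A -> Rbar_le (Finite (k*B)) (Rbar_mult (Finite k) A).
Proof.
  intros Hk HA. destruct A as [a| |]; simpl in HA |- *.
  - apply Rmult_le_compat_l; lra.
  - unfold Rbar_mult; simpl. destruct (Rle_dec 0 k); [|lra].
    destruct (Rle_lt_or_eq_dec 0 k r); simpl; auto. lra.
  - contradiction.
Qed.


Lemma phi_incr_pos r0 phi : in_K r0 phi -> forall s t, 0 < s < t -> t < r0 -> phi s < phi t.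
Proof.
  intros [_ [[phi' [Hd [_ Hp]]] _]] s t Hst Ht.
  destruct (MVT_gen phi s t phi') as [c [Hc Heq]].
  - intros x Hx. rewrite Rmin_left in Hx by lra. rewrite Rmax_right in Hx by lra.
    apply Hd; lra.
  - intros x Hx. rewrite Rmin_left in Hx by lra. rewrite Rmax_right in Hx by lra.
    apply continuity_pt_filterlim. apply (@ex_derive_continuous R_AbsRing R_NormedModule). exists (phi' x). apply Hd; lra.
  - rewrite Rmin_left in Hc by lra. rewrite Rmax_right in Hc by lra.
    assert (0 < phi' c) by (apply Hp; lra).
    assert (0 < phi' c * (t - s)) by (apply Rmult_lt_0_compat; lra). lra.
Qed.

Lemma phi_incr r0 phi : in_K r0 phi -> forall s t, 0 <= s < t -> t < r0 -> phi s < phi t.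
Proof.
  intros HK s t Hst Ht. destruct (Rle_lt_or_eq_dec 0 s (proj1 Hst)) as [Hs|Hs].
  - apply (phi_incr_pos r0); auto; lra.
  - subst s. assert (phi (t/2) < phi t) by (apply (phi_incr_pos r0); auto; lra).
    destruct (Rle_or_lt (phi 0) (phi (t/2))) as [Hle|Hlt]; [lra|].
    exfalso. pose proof HK as HK0. destruct HK as [Hc _]. assert (Hr0 : 0 < r0) by lra.
    destruct (Hc 0 (conj (Rle_refl 0) Hr0) (phi 0 - phi (t/2))) as [dl [Hdl Hdl2]]; [lra|].
    set (v := Rmin (dl/2) (t/4)).
    assert (0 < v) by (unfold v; apply Rmin_glb_lt; lra).
    assert (v <= t/4) by (unfold v; apply Rmin_r).
    assert (v <= dl/2) by (unfold v; apply Rmin_l).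
    assert (Hv := Hdl2 v (conj (ltac:(lra) : 0 <= v) (ltac:(lra) : v < r0))).
    assert (Rabs (v - 0) < dl) by (rewrite Rabs_right; lra).
    specialize (Hv H3).
    assert (phi v < phi (t/2)) by (apply (phi_incr_pos r0 phi HK0); lra).
    apply Rabs_def2 in Hv. lra.
Qed.

Lemma phi_le r0 phi : in_K r0 phi -> forall s t, 0 <= s <= t -> t < r0 -> phi s <= phi t.
Proof.
  intros HK s t Hst Ht. destruct (Req_dec s t). subst; lra.
  left. apply (phi_incr r0); auto; lra.
Qed.

Lemma phi_0 r0 phi : in_K r0 phi -> phi 0 = 0.
Proof. intros [_ [_ H]]; exact H. Qed.

Lemma phi_left r0 phi : in_K r0 phi -> forall t, 0 < t < r0 -> forall e, 0 < e ->
  exists u, 0 < u < t /\ phi t - phi u < e.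
Proof.
  intros HK t Ht e He. destruct HK as [Hc _].
  destruct (Hc t (conj (ltac:(lra) : 0 <= t) (proj2 Ht)) e He) as [dl [Hdl Hdl2]].
  set (u := Rmax (t - dl/2) (t/2)).
  assert (t - dl/2 <= u) by apply Rmax_l. assert (t/2 <= u) by apply Rmax_r.
  assert (u < t) by (unfold u; apply Rmax_lub_lt; lra).
  exists u. split. lra.
  assert (Rabs (u - t) < dl) by (rewrite Rabs_left; lra).
  specialize (Hdl2 u (conj (ltac:(lra) : 0 <= u) (ltac:(lra) : u < r0)) H2).
  apply Rabs_def2 in Hdl2. lra.
Qed.

Lemma phi_left' r0 phi : in_K r0 phi -> forall t b, 0 < t < r0 -> b < phi t ->
  exists u, 0 <= u < t /\ b < phi u.
Proof.
  intros HK t b Ht Hb. destruct (phi_left r0 phi HK t Ht (phi t - b)) as [u [Hu Hu2]]; [lra|].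
  exists u. split; lra.
Qed.

Lemma phi_pos r0 phi : in_K r0 phi -> forall t, 0 < t < r0 -> 0 < phi t.
Proof. intros HK t Ht. rewrite <- (phi_0 r0 phi HK). apply (phi_incr r0); auto; lra. Qed.

Lemma phi_lt_r0 r0 phi phir0 : in_K r0 phi -> left_limit_at phi r0 phir0 ->
  forall t, 0 <= t < r0 -> Rbar_lt (Finite (phi t)) phir0.
Proof.
  intros HK Hl t Ht. set (t' := (t + r0)/2).
  assert (Hpt : phi t < phi t') by (apply (phi_incr r0); auto; unfold t'; lra).
  unfold left_limit_at in Hl.
  destruct phir0 as [L| |]; simpl; auto.
  - apply Rnot_le_lt. intros HL.
    assert (Hn : Rbar_locally (Finite L) (fun v => v < phi t')).
    { simpl. exists (mkposreal (phi t' - L) ltac:(lra)). intros v Hv.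
      unfold ball in Hv; simpl in Hv. unfold AbsRing_ball, abs, minus, plus, opp in Hv; simpl in Hv.
      apply Rabs_def2 in Hv. simpl in Hv. lra. }
    specialize (Hl _ Hn). unfold filtermap, at_left, within in Hl.
    destruct Hl as [eps Heps].
    set (s := Rmax t' (r0 - eps/2)).
    assert (t' <= s) by apply Rmax_l. assert (r0 - eps/2 <= s) by apply Rmax_r.
    assert (s < r0) by (unfold s; apply Rmax_lub_lt; unfold t'; [lra| destruct eps; simpl; lra]).
    assert (ball r0 eps s).
    { unfold ball; simpl. unfold AbsRing_ball, abs, minus, plus, opp; simpl.
      rewrite Rabs_left; destruct eps; simpl in *; lra. }
    specialize (Heps s H2 H1).
    destruct (Req_dec t' s) as [E|E]. rewrite <- E in Heps; lra.
    assert (phi t' < phi s) by (apply (phi_incr r0); auto; unfold t' in *; lra). lra.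
  - assert (Hn : Rbar_locally m_infty (fun v => v < phi t')).
    { simpl. exists (phi t'). intros; lra. }
    specialize (Hl _ Hn). unfold filtermap, at_left, within in Hl.
    destruct Hl as [eps Heps].
    set (s := Rmax t' (r0 - eps/2)).
    assert (t' <= s) by apply Rmax_l. assert (r0 - eps/2 <= s) by apply Rmax_r.
    assert (s < r0) by (unfold s; apply Rmax_lub_lt; unfold t'; [lra| destruct eps; simpl; lra]).
    assert (ball r0 eps s).
    { unfold ball; simpl. unfold AbsRing_ball, abs, minus, plus, opp; simpl.
      rewrite Rabs_left; destruct eps; simpl in *; lra. }
    specialize (Heps s H2 H1).
    destruct (Req_dec t' s) as [E|E]. rewrite <- E in Heps; lra.
    assert (phi t' < phi s) by (apply (phi_incr r0); auto; unfold t' in *; lra). lra.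
Qed.


Section Main.
Variable X : Type.
Variable d : X -> X -> R.
Hypothesis Hmet : is_metric X d.
Variable f : X -> Rbar.
Hypothesis Hf : no_minus_infty X f.
Hypothesis Hlsc : lsc X d f.
Variables r0 k : R.
Hypothesis Hr0 : 0 < r0.
Hypothesis Hk : 0 < k.
Variable phi : R -> R.
Hypothesis HK : in_K r0 phi.

Let g := phi_comp phi r0 f.

Lemma d_nonneg x y : 0 <= d x y. Proof. apply (proj1 Hmet). Qed.
Lemma d_refl x : d x x = 0. Proof. apply (proj1 (proj2 Hmet)). reflexivity. Qed.
Lemma d_eq x y : d x y = 0 -> x = y. Proof. apply (proj1 (proj2 Hmet)). Qed.
Lemma d_sym x y : d x y = d y x. Proof. apply (proj1 (proj2 (proj2 Hmet))). Qed.
Lemma d_tri x y z : d x z <= d x y + d y z. Proof. apply (proj2 (proj2 (proj2 Hmet))). Qed.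
Lemma d_pos x y : x <> y -> 0 < d x y.
Proof. intros H. destruct (d_nonneg x y); auto. exfalso; apply H, d_eq; auto. Qed.

Lemma g_fin x w : f x = Finite w -> 0 <= w < r0 -> g x = Finite (phi w).
Proof.
  intros Hx Hw. unfold g, phi_comp. rewrite Hx.
  destruct (Rlt_dec w 0); [lra|]. destruct (Rlt_dec w r0); [reflexivity|lra].
Qed.

Lemma g_not_minf x : g x <> m_infty.
Proof.
  unfold g, phi_comp. pose proof (Hf x). destruct (f x) as [w| |]; try congruence.
  destruct (Rlt_dec w 0); try congruence. destruct (Rlt_dec w r0); congruence.
Qed.

Lemma lvl z u : 0 <= u < r0 -> Rbar_le (g z) (Finite (phi u)) -> Rbar_le (f z) (Finite u).
Proof.
  intros Hu H. unfold g, phi_comp in H. destruct (f z) as [w| |]; simpl in *; auto.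
  destruct (Rlt_dec w 0); simpl in H. lra.
  destruct (Rlt_dec w r0); simpl in H; [|contradiction].
  destruct (Rle_or_lt w u); auto.
  assert (phi u < phi w) by (apply (phi_incr r0); auto; lra). lra.
Qed.

Lemma lvl2 z u : 0 <= u < r0 -> Rbar_le (f z) (Finite u) -> Rbar_le (g z) (Finite (phi u)).
Proof.
  intros Hu H. unfold g, phi_comp. destruct (f z) as [w| |]; simpl in *; auto.
  destruct (Rlt_dec w 0); simpl.
  - assert (phi 0 <= phi u) by (apply (phi_le r0); auto; lra). rewrite (phi_0 r0 phi HK) in H0. lra.
  - destruct (Rlt_dec w r0); simpl; [|lra]. apply (phi_le r0); auto; lra.
Qed.

Lemma gpos x t : g x = Finite t -> 0 < t -> exists w, f x = Finite w /\ 0 < w < r0 /\ t = phi w.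
Proof.
  intros H Ht. unfold g, phi_comp in H. destruct (f x) as [w| |]; try discriminate.
  destruct (Rlt_dec w 0). injection H; intros; lra.
  destruct (Rlt_dec w r0); [|discriminate]. injection H; intros; subst.
  exists w. repeat split; auto; try lra.
  destruct (Req_dec w 0); [|lra]. subst. rewrite (phi_0 r0 phi HK) in Ht. lra.
Qed.

Lemma g_lsc x t b : g x = Finite t -> 0 < b < t ->
  exists delta, 0 < delta /\ forall z, d x z < delta -> Rbar_lt (Finite b) (g z).
Proof.
  intros Hx Hb. destruct (gpos x t Hx) as [w [Hw1 [Hw2 Hw3]]]; [lra|]. subst t.
  destruct (phi_left' r0 phi HK w b Hw2 (proj2 Hb)) as [w' [Hw' Hb']].
  destruct (Hlsc x w') as [dl [Hdl Hdl2]]. rewrite Hw1; simpl; lra.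
  exists dl. split; auto. intros z Hz. specialize (Hdl2 z Hz).
  unfold g, phi_comp. destruct (f z) as [v| |]; simpl in *; auto.
  destruct (Rlt_dec v 0); [lra|]. destruct (Rlt_dec v r0); simpl; auto.
  assert (phi w' < phi v) by (apply (phi_incr r0); auto; lra). lra.
Qed.

Lemma distX_le x S B : (forall e, 0 < e -> exists z, S z /\ d x z <= B + e) ->
  Rbar_le (distX X d x S) (Finite B).
Proof.
  intros H. apply Rbar_not_lt_le. intros Hl.
  destruct (distX X d x S) as [D| |] eqn:HD; simpl in Hl.
  - destruct (H ((D - B)/2)) as [z [Sz Hz]]. lra.
    assert (Rbar_le (Finite D) (Finite (d x z))).
    { rewrite <- HD. apply glb_le. exists z; auto. }
    simpl in H0. lra.
  - destruct (H 1) as [z [Sz Hz]]. lra.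
    assert (Rbar_le p_infty (Finite (d x z))).
    { rewrite <- HD. apply glb_le. exists z; auto. }
    simpl in H0. contradiction.
  - contradiction.
Qed.

Lemma distX_lt x S B : Rbar_lt (distX X d x S) (Finite B) -> exists z, S z /\ d x z < B.
Proof.
  intros H. destruct (glb_lt _ _ H) as [t [[z [Sz Ht]] Hlt]]. subst t. simpl in Hlt.
  exists z; auto.
Qed.

Lemma distX_mem x (S : X -> Prop) : S x -> Rbar_le (distX X d x S) (Finite 0).
Proof. intros H. apply distX_le. intros e He. exists x. split; auto. rewrite d_refl; lra. Qed.

End Main.


Lemma div_le_iff x y k : 0 < k -> (x / k <= y <-> x <= k * y).
Proof.
  intros Hk. split; intros H.
  - replace x with (k * (x / k)) by (field; lra). apply Rmult_le_compat_l; lra.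
  - replace (x / k) with (x * / k) by reflexivity.
    replace y with (k * y * / k) by (field; lra).
    apply Rmult_le_compat_r; [left; apply Rinv_0_lt_compat; lra| lra].
Qed.
Lemma div_lt_iff x y k : 0 < k -> (x / k < y <-> x < k * y).
Proof.
  intros Hk. split; intros H.
  - replace x with (k * (x / k)) by (field; lra). apply Rmult_lt_compat_l; lra.
  - replace (x / k) with (x * / k) by reflexivity.
    replace y with (k * y * / k) by (field; lra).
    apply Rmult_lt_compat_r; [apply Rinv_0_lt_compat; lra| lra].
Qed.
Lemma div_le_mono x y k : 0 < k -> x <= y -> x / k <= y / k.
Proof. intros. unfold Rdiv. apply Rmult_le_compat_r; [left; apply Rinv_0_lt_compat; lra| lra]. Qed.
Lemma div_nonneg x k : 0 < k -> 0 <= x -> 0 <= x / k.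
Proof. intros. unfold Rdiv. apply Rmult_le_pos; [lra| left; apply Rinv_0_lt_compat; lra]. Qed.

Section EB.
Variable X : Type.
Variable d : X -> X -> R.
Hypothesis Hmet : is_metric X d.
Hypothesis Hcomp : complete_metric X d.
Variable f : X -> Rbar.
Hypothesis Hf : no_minus_infty X f.
Hypothesis Hlsc : lsc X d f.
Variables r0 k : R.
Hypothesis Hr0 : 0 < r0.
Hypothesis Hk : 0 < k.
Variable phi : R -> R.
Hypothesis HK : in_K r0 phi.
Let g := phi_comp phi r0 f.
Hypothesis H3 : forall x, Rbar_lt (Finite 0) (f x) -> Rbar_lt (f x) (Finite r0) ->
           Rbar_le (Finite (/ k)) (strong_slope X d g x).

Variables (x0 : X) (c a e : R).
Hypothesis Hx0 : g x0 = Finite c.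
Hypothesis Ha : 0 < a < c.
Hypothesis He : 0 < e.

Let kp := k + e / (c - a).
Lemma kp_gt : k < kp.
Proof. unfold kp. assert (0 < e / (c - a)) by (apply Rdiv_lt_0_compat; lra). lra. Qed.
Lemma kp_pos : 0 < kp.
Proof. pose proof kp_gt; lra. Qed.

Definition Gr (y : X) : R := match g y with Finite t => Rmax a t | _ => c + 1 end.
Definition Sk (u y : X) : Prop := Gr y + d u y / kp <= Gr u.

Lemma Gr_ge y : a <= Gr y.
Proof. unfold Gr. destruct (g y); try lra. apply Rmax_l. Qed.
Lemma Gr_x0 : Gr x0 = c.
Proof. unfold Gr. rewrite Hx0. apply Rmax_right. lra. Qed.
Lemma Sk_refl u : Sk u u.
Proof. unfold Sk. rewrite (d_refl X d Hmet). unfold Rdiv. lra. Qed.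
Lemma Sk_trans u v y : Sk u v -> Sk v y -> Sk u y.
Proof.
  unfold Sk. intros H1 H2. pose proof (d_tri X d Hmet u v y).
  assert (d u y / kp <= (d u v + d v y) / kp) by (apply div_le_mono; [apply kp_pos|auto]).
  unfold Rdiv in *. rewrite Rmult_plus_distr_r in H0. lra.
Qed.
Lemma Sk_Gr u y : Sk u y -> Gr y <= Gr u.
Proof.
  unfold Sk. intros H. pose proof (div_nonneg (d u y) kp kp_pos (d_nonneg X d Hmet u y)). lra.
Qed.

Lemma u0_ex : exists u0, f x0 = Finite u0 /\ 0 < u0 < r0 /\ c = phi u0.
Proof. apply (gpos X f r0 phi HK x0 c Hx0). lra. Qed.

Lemma Gr_fin y : Gr y <= c -> exists t, g y = Finite t /\ t <= c /\ Gr y = Rmax a t.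
Proof.
  unfold Gr. intros H. destruct (g y) as [t| |]; try lra.
  exists t. repeat split; auto. pose proof (Rmax_r a t). lra.
Qed.

Lemma Gr_f y : Gr y <= c -> forall u0, f x0 = Finite u0 -> 0 < u0 < r0 -> c = phi u0 ->
  Rbar_le (f y) (Finite u0).
Proof.
  intros H u0 H1 H2 H3'. destruct (Gr_fin y H) as [t [Ht [Htc _]]].
  apply (lvl X f r0 phi HK); [lra|]. fold g. rewrite Ht. simpl. lra.
Qed.

Lemma near_inf u eta : 0 < eta -> exists v, Sk u v /\ forall y, Sk u y -> Gr v <= Gr y + eta.
Proof.
  intros Heta. apply NNPP. intros Hn.
  assert (Hstep : forall v, Sk u v -> exists y, Sk u y /\ Gr y + eta < Gr v).
  { intros v Hv. apply NNPP. intros Hn2. apply Hn. exists v. split; auto.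
    intros y Hy. apply Rnot_lt_le. intros Hlt. apply Hn2. exists y. split; auto. }
  assert (Hind : forall n, exists w, Sk u w /\ Gr w <= Gr u - INR n * eta).
  { induction n as [|n IH].
    - exists u. split. apply Sk_refl. simpl. lra.
    - destruct IH as [w [Hw Hw2]]. destruct (Hstep w Hw) as [y [Hy Hy2]].
      exists y. split; auto. rewrite S_INR. lra. }
  destruct (archimed_cor1 (eta / (Gr u - a + 1))) as [N [HN HN0]].
  { apply Rdiv_lt_0_compat; auto. pose proof (Gr_ge u). lra. }
  destruct (Hind N) as [w [_ Hw]]. pose proof (Gr_ge w). pose proof (Gr_ge u).
  assert (HINR : 0 < INR N) by (apply lt_0_INR; auto).
  assert (Gr u - a + 1 < INR N * eta).
  { assert (/ INR N * (Gr u - a + 1) < eta).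
    { apply (Rmult_lt_compat_r (Gr u - a + 1)) in HN; [|lra].
      unfold Rdiv in HN. rewrite Rmult_assoc, Rinv_l in HN by lra. lra. }
    apply (Rmult_lt_compat_l (INR N)) in H1; auto.
    rewrite <- Rmult_assoc, Rinv_r in H1 by lra. lra. }
  lra.
Qed.

Definition epsn (n : nat) : R := / (INR n + 1).
Lemma epsn_pos n : 0 < epsn n.
Proof. unfold epsn. apply Rinv_0_lt_compat. pose proof (pos_INR n). lra. Qed.

Definition next (n : nat) (u : X) : X :=
  proj1_sig (constructive_indefinite_description _ (near_inf u (epsn n) (epsn_pos n))).
Lemma next_spec n u : Sk u (next n u) /\ forall y, Sk u y -> Gr (next n u) <= Gr y + epsn n.
Proof. unfold next. destruct (constructive_indefinite_description _ _) as [v Hv]. exact Hv. Qed.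

Fixpoint xs (n : nat) : X := match n with O => x0 | S m => next m (xs m) end.

Lemma xs_mono n m : (n <= m)%nat -> Sk (xs n) (xs m).
Proof.
  induction 1. apply Sk_refl. apply Sk_trans with (xs m); auto. simpl. apply next_spec.
Qed.

Lemma Gr_xs n : Gr (xs n) <= c.
Proof. rewrite <- Gr_x0. apply Sk_Gr. apply (xs_mono 0). lia. Qed.

Lemma xs_diam n y : Sk (xs (S n)) y -> d (xs (S n)) y <= kp * epsn n.
Proof.
  intros H. assert (Sk (xs n) y) by (apply Sk_trans with (xs (S n)); auto; simpl; apply next_spec).
  pose proof (proj2 (next_spec n (xs n)) y H0). simpl in H. unfold Sk in H.
  simpl. apply (proj1 (div_le_iff _ _ _ kp_pos)). lra.
Qed.

Lemma xs_cauchy : forall eps, 0 < eps -> exists N, forall m n, (N <= m)%nat -> (N <= n)%nat ->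
  d (xs m) (xs n) < eps.
Proof.
  intros eps Heps. pose proof kp_pos.
  destruct (archimed_cor1 (eps / (2 * kp))) as [N1 [HN HN0]].
  { apply Rdiv_lt_0_compat; lra. }
  exists (S N1). intros m n Hm Hn.
  assert (HINR : 0 < INR N1) by (apply lt_0_INR; auto).
  assert (He1 : epsn N1 <= / INR N1).
  { unfold epsn. apply Rinv_le_contravar; lra. }
  assert (Hb : kp * epsn N1 < eps / 2).
  { assert (kp * / INR N1 < eps / 2).
    { apply (Rmult_lt_compat_l kp) in HN; auto.
      replace (kp * (eps / (2 * kp))) with (eps / 2) in HN by (field; lra). exact HN. }
    assert (kp * epsn N1 <= kp * / INR N1) by (apply Rmult_le_compat_l; lra). lra. }
  pose proof (xs_diam N1 (xs m) (xs_mono _ _ Hm)).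
  pose proof (xs_diam N1 (xs n) (xs_mono _ _ Hn)).
  pose proof (d_tri X d Hmet (xs m) (xs (S N1)) (xs n)) as Ht.
  rewrite (d_sym X d Hmet (xs m) (xs (S N1))) in Ht. lra.
Qed.


Lemma lim_ex : exists l, forall eps, 0 < eps -> exists N, forall n, (N <= n)%nat -> d (xs n) l < eps.
Proof. apply Hcomp. apply xs_cauchy. Qed.

Lemma Gr_lsc l t b : g l = Finite t -> t <= c -> b < Rmax a t ->
  exists delta, 0 < delta /\ forall z, d l z < delta -> b < Gr z.
Proof.
  intros Hl Htc Hb. destruct (Rlt_or_le b a) as [Hba|Hba].
  - exists 1. split. lra. intros z _. pose proof (Gr_ge z). lra.
  - assert (Hbt : b < t).
    { destruct (Rle_or_lt a t). rewrite Rmax_right in Hb; lra. rewrite Rmax_left in Hb; lra. }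
    destruct (g_lsc X d f Hlsc r0 phi HK l t b Hl) as [dl [Hdl Hdl2]]. lra.
    exists dl. split; auto. intros z Hz. specialize (Hdl2 z Hz). fold g in Hdl2.
    unfold Gr. destruct (g z) as [s| |]; simpl in Hdl2.
    + pose proof (Rmax_r a s). lra.
    + lra.
    + contradiction.
Qed.

Lemma closed_S (l : X) (Hl : forall eps, 0 < eps -> exists N, forall n, (N <= n)%nat -> d (xs n) l < eps) :
  forall n, Sk (xs n) l.
Proof.
  intros n. destruct u0_ex as [u0 [Hu0 [Hu0r Hc]]].
  assert (Hfl : Rbar_le (f l) (Finite u0)).
  { apply Rbar_not_lt_le. intros Hlt. destruct (Hlsc l u0 Hlt) as [dl [Hdl Hdl2]].
    destruct (Hl dl Hdl) as [N HN]. specialize (HN N (le_n N)).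
    rewrite (d_sym X d Hmet) in HN. specialize (Hdl2 _ HN).
    pose proof (Gr_f (xs N) (Gr_xs N) u0 Hu0 Hu0r Hc).
    pose proof (Rbar_lt_le_trans _ _ _ Hdl2 H). simpl in H0. lra. }
  assert (Hgl : Rbar_le (g l) (Finite c)).
  { rewrite Hc. apply (lvl2 X f r0 phi HK); auto. lra. }
  assert (Hgm := g_not_minf X f Hf r0 phi l). fold g in Hgm.
  destruct (g l) as [t| |] eqn:Hgl'; simpl in Hgl; try contradiction.
  apply NNPP. intros Hns. unfold Sk in Hns. apply Rnot_le_lt in Hns.
  set (u := xs n) in *.
  set (gap := Gr l + d u l / kp - Gr u) in *.
  assert (Hgap : 0 < gap) by (unfold gap; lra).
  assert (HGrl : Gr l = Rmax a t) by (unfold Gr; rewrite Hgl'; reflexivity).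
  destruct (Gr_lsc l t (Gr l - gap/2) Hgl' Hgl) as [dl [Hdl Hdl2]]. rewrite <- HGrl; lra.
  pose proof kp_pos as Hkp.
  destruct (Hl (Rmin dl (kp * gap / 2))) as [N HN].
  { apply Rmin_glb_lt; auto. apply Rdiv_lt_0_compat; [apply Rmult_lt_0_compat|]; lra. }
  set (m := Nat.max N n).
  specialize (HN m (Nat.le_max_l N n)).
  assert (Hm1 : d (xs m) l < dl) by (pose proof (Rmin_l dl (kp * gap / 2)); lra).
  assert (Hm2 : d (xs m) l < kp * gap / 2) by (pose proof (Rmin_r dl (kp * gap / 2)); lra).
  rewrite (d_sym X d Hmet) in Hm1. specialize (Hdl2 _ Hm1).
  pose proof (xs_mono n m (Nat.le_max_r N n)) as HS. fold u in HS. unfold Sk in HS.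
  pose proof (d_tri X d Hmet u (xs m) l) as Ht.
  assert (Hq : d u l / kp <= d u (xs m) / kp + d (xs m) l / kp).
  { unfold Rdiv. rewrite <- Rmult_plus_distr_r. apply div_le_mono; auto. }
  assert (Hq2 : d (xs m) l / kp < gap / 2).
  { apply (proj2 (div_lt_iff _ _ _ Hkp)). lra. }
  unfold gap in *. lra.
Qed.

Lemma ekeland_pt (l : X) (Hl : forall n, Sk (xs n) l) : forall y, Sk l y -> y = l.
Proof.
  intros y Hy.
  assert (HG : Gr l <= Gr y).
  { apply Rnot_lt_le. intros Hlt.
    destruct (archimed_cor1 (Gr l - Gr y)) as [N [HN HN0]]. lra.
    assert (Hy' : Sk (xs N) y) by (apply Sk_trans with l; auto).
    pose proof (proj2 (next_spec N (xs N)) y Hy') as H1.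
    pose proof (Sk_Gr _ _ (Hl (S N))) as H2. simpl in H2.
    assert (epsn N <= / INR N).
    { unfold epsn. apply Rinv_le_contravar. apply lt_0_INR; auto. lra. }
    lra. }
  unfold Sk in Hy. pose proof (div_nonneg (d l y) kp kp_pos (d_nonneg X d Hmet l y)).
  assert (d l y / kp = 0) by lra.
  assert (d l y = 0).
  { unfold Rdiv in H0. apply Rmult_integral in H0. destruct H0; auto.
    exfalso. pose proof (Rinv_0_lt_compat kp kp_pos). lra. }
  symmetry. apply (d_eq X d Hmet). auto.
Qed.


Lemma EB_main : exists z, Rbar_le (g z) (Finite a) /\ d x0 z <= k * (c - a) + e.
Proof.
  destruct lim_ex as [l Hl]. pose proof (closed_S l Hl) as HS.
  pose proof (ekeland_pt l HS) as HE.
  pose proof kp_pos as Hkp. pose proof kp_gt as Hkpk.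
  assert (Hlc : Gr l <= c) by (rewrite <- Gr_x0; apply Sk_Gr; exact (HS 0%nat)).
  assert (HGa : Gr l <= a).
  { apply Rnot_lt_le. intros Hlt.
    destruct (Gr_fin l Hlc) as [t [Hgl [Htc HGrl]]].
    assert (Hta : a < t).
    { destruct (Rle_or_lt a t). rewrite Rmax_right in HGrl; lra. rewrite Rmax_left in HGrl; lra. }
    rewrite Rmax_right in HGrl by lra.
    destruct (gpos X f r0 phi HK l t Hgl) as [w [Hfw [Hw Htw]]]. lra.
    assert (Hsl := H3 l). rewrite Hfw in Hsl. simpl in Hsl. specialize (Hsl (proj1 Hw) (proj2 Hw)).
    destruct (Gr_lsc l t a Hgl Htc) as [dl [Hdl Hdl2]]. rewrite Rmax_right; lra.
    set (E := fun t0 : Rbar => t0 = Finite 0 \/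
          exists y, 0 < d l y < dl /\
            t0 = Rbar_mult (Rbar_pos_diff (g l) (g y)) (Finite (/ d l y))).
    assert (Hle : Rbar_le (strong_slope X d g l) (Rbar_lub E)).
    { apply glb_le. exists dl. split; auto. }
    assert (Hlt2 : Rbar_lt (Finite (/ kp)) (Rbar_lub E)).
    { apply Rbar_lt_le_trans with (Finite (/ k)). simpl. apply Rinv_lt_contravar; auto.
      apply Rmult_lt_0_compat; lra.
      apply Rbar_le_trans with (strong_slope X d g l); auto. }
    destruct (lt_lub _ _ Hlt2) as [v [Ev Hv]].
    destruct Ev as [Ev|[y [Hy Ev]]]; subst v.
    - simpl in Hv. pose proof (Rinv_0_lt_compat kp Hkp). lra.
    - rewrite Hgl in Hv. assert (Hgm := g_not_minf X f Hf r0 phi y). fold g in Hgm.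
      destruct (g y) as [s| |] eqn:Hgy; simpl in Hv; try contradiction.
      + assert (Hdy : d l y / kp < Rmax 0 (t - s)).
        { replace (Rmax 0 (t - s)) with (Rmax 0 (t - s) * / d l y * d l y) by (field; lra).
          unfold Rdiv. rewrite Rmult_comm. apply Rmult_lt_compat_r; [lra| exact Hv]. }
        pose proof (div_nonneg (d l y) kp Hkp (d_nonneg X d Hmet l y)).
        assert (Hts : d l y / kp < t - s).
        { destruct (Rle_or_lt 0 (t - s)). rewrite Rmax_right in Hdy; lra. rewrite Rmax_left in Hdy; lra. }
        specialize (Hdl2 y (proj2 Hy)). unfold Gr in Hdl2. rewrite Hgy in Hdl2.
        assert (Hsa : a < s).
        { destruct (Rle_or_lt a s). rewrite Rmax_right in Hdl2; lra. rewrite Rmax_left in Hdl2; lra. }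
        assert (Sk l y).
        { unfold Sk. unfold Gr at 1. rewrite Hgy. rewrite Rmax_right by lra.
          assert (Gr l = t) by (unfold Gr; rewrite Hgl; apply Rmax_right; lra). lra. }
        specialize (HE y H0). subst y. rewrite (d_refl X d Hmet) in Hy. lra.
      + rewrite Rmult_0_l in Hv. pose proof (Rinv_0_lt_compat kp Hkp). lra. }
  destruct (Gr_fin l Hlc) as [t [Hgl [Htc HGrl]]].
  exists l. split.
  - rewrite Hgl. simpl. pose proof (Rmax_r a t). lra.
  - pose proof (HS 0%nat) as H0. simpl in H0. unfold Sk in H0. rewrite Gr_x0 in H0.
    pose proof (Gr_ge l).
    assert (Hq : d x0 l / kp <= c - a) by lra.
    apply (proj1 (div_le_iff _ _ _ Hkp)) in Hq.
    replace (k * (c - a) + e) with (kp * (c - a)) by (unfold kp; field; lra). exact Hq.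
Qed.

End EB.


Lemma mult_pinf k : 0 < k -> Rbar_mult (Finite k) p_infty = p_infty.
Proof.
  intros Hk. unfold Rbar_mult; simpl. destruct (Rle_dec 0 k); [|lra].
  destruct (Rle_lt_or_eq_dec 0 k r); simpl; auto. lra.
Qed.

Section Final.
Variable X : Type.
Variable d : X -> X -> R.
Hypothesis Hmet : is_metric X d.
Hypothesis Hcomp : complete_metric X d.
Variable f : X -> Rbar.
Hypothesis Hf : no_minus_infty X f.
Hypothesis Hlsc : lsc X d f.
Variables r0 k : R.
Hypothesis Hr0 : 0 < r0.
Hypothesis Hk : 0 < k.
Variable phi : R -> R.
Hypothesis HK : in_K r0 phi.
Let g := phi_comp phi r0 f.

Lemma SL x r : f x = Finite r -> 0 < r < r0 ->
  (forall eta, 0 < eta -> exists D, 0 < D < eta /\ forall e', 0 < e' ->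
     exists z, Rbar_le (g z) (Finite (phi r - D)) /\ d x z < k * D + e') ->
  Rbar_le (Finite (/ k)) (strong_slope X d g x).
Proof.
  intros Hx Hr HH. apply le_glb. intros s [dl [Hdl ->]]. apply lub_ge. intros m Hm.
  destruct (Rle_or_lt m 0) as [Hm0|Hm0].
  - exists (Finite 0). split. left; auto. simpl; auto.
  - destruct (HH (dl * m)) as [D [HD HD2]]. apply Rmult_lt_0_compat; lra.
    assert (Hmk : k < / m).
    { rewrite <- (Rinv_inv k). apply Rinv_lt_contravar; auto.
      apply Rmult_lt_0_compat; auto. apply Rinv_0_lt_compat; lra. }
    destruct (HD2 (D * (/ m - k))) as [z [Hz Hdz]].
    { apply Rmult_lt_0_compat; lra. }
    assert (Hgx : g x = Finite (phi r)) by (apply (g_fin X f r0 phi x r Hx); lra).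
    assert (Hgm := g_not_minf X f Hf r0 phi z). fold g in Hgm.
    destruct (g z) as [sz| |] eqn:Hgz; simpl in Hz; try contradiction.
    assert (Hxz : x <> z).
    { intros ->. rewrite Hgx in Hgz. injection Hgz. lra. }
    pose proof (d_pos X d Hmet x z Hxz) as Hdpos.
    assert (Hdz2 : d x z < D / m).
    { replace (D / m) with (k * D + D * (/ m - k)) by (field; lra). lra. }
    exists (Rbar_mult (Rbar_pos_diff (g x) (g z)) (Finite (/ d x z))). split.
    + right. exists z. split; auto. split; auto.
      apply Rlt_trans with (D / m); auto.
      apply (proj2 (div_lt_iff _ _ _ Hm0)). lra.
    + rewrite Hgx, Hgz. simpl.
      assert (Hmx : D <= Rmax 0 (phi r - sz)) by (pose proof (Rmax_r 0 (phi r - sz)); lra).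
      assert (m * d x z < D).
      { assert (m * d x z < m * (D / m)) by (apply Rmult_lt_compat_l; auto).
        replace (m * (D / m)) with D in H by (field; lra). exact H. }
      assert (m < D * / d x z).
      { apply (Rmult_lt_reg_r (d x z)); auto. rewrite Rmult_assoc, Rinv_l by lra. lra. }
      assert (D * / d x z <= Rmax 0 (phi r - sz) * / d x z).
      { apply Rmult_le_compat_r; auto. left; apply Rinv_0_lt_compat; auto. }
      lra.
Qed.

Lemma i_to_iii phir0 : left_limit_at phi r0 phir0 ->
  metric_regular_on X d (epi_map phi r0 f) k
    (fun x y => Rbar_lt (Finite 0) (f x) /\ Rbar_lt (f x) (Finite r0) /\
                0 < y /\ Rbar_lt (Finite y) phir0) ->
  forall x, Rbar_lt (Finite 0) (f x) -> Rbar_lt (f x) (Finite r0) ->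
    Rbar_le (Finite (/ k)) (strong_slope X d g x).
Proof.
  intros Hlim Hreg x H0 H1.
  destruct (f x) as [r| |] eqn:Hx; simpl in H0, H1; try contradiction.
  assert (Hgx : g x = Finite (phi r)) by (apply (g_fin X f r0 phi x r Hx); lra).
  destruct (Hreg x (phi r)) as [eps [dl [Heps [Hdl Hreg2]]]].
  - unfold epi_map. fold g. rewrite Hgx. simpl. lra.
  - rewrite Hx. simpl. repeat split; auto. apply (phi_pos r0); auto.
    apply (phi_lt_r0 r0 phi phir0 HK Hlim). lra.
  - apply (SL x r Hx (conj H0 H1)). intros eta Heta.
    set (D := Rmin (eta/2) (dl/2)).
    assert (HD1 : D <= eta/2) by apply Rmin_l. assert (HD2 : D <= dl/2) by apply Rmin_r.
    assert (HD0 : 0 < D) by (apply Rmin_glb_lt; lra).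
    exists D. split. lra. intros e' He'.
    assert (Hr := Hreg2 x (phi r - D)).
    rewrite (d_refl X d Hmet) in Hr.
    assert (Rabs (phi r - D - phi r) < dl) by (rewrite Rabs_left; lra).
    specialize (Hr Heps H).
    assert (Hdr : Rbar_le (distR (phi r - D) (epi_map phi r0 f x)) (Finite D)).
    { apply Rbar_le_trans with (Finite (Rabs (phi r - D - phi r))).
      apply glb_le. exists (phi r). split; auto. unfold epi_map. fold g. rewrite Hgx. simpl; lra.
      simpl. rewrite Rabs_left; lra. }
    pose proof (mult_le k _ _ Hk Hdr) as Hm.
    assert (Hlt : Rbar_lt (distX X d x (fun z => epi_map phi r0 f z (phi r - D))) (Finite (k * D + e'))).
    { apply Rbar_le_lt_trans with (Finite (k * D)). eapply Rbar_le_trans; eauto. simpl. lra. }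
    destruct (distX_lt X d x _ _ Hlt) as [z [Hz Hdz]].
    exists z. split; auto.
Qed.

Lemma sub_le_haus S1 S2 x : S1 x -> Rbar_le (distX X d x S2) (HausDist X d S1 S2).
Proof.
  intros H. apply Rbar_le_trans with (Rbar_lub (fun t => exists x, S1 x /\ t = distX X d x S2)).
  apply le_lub. exists x. split; eauto.
  unfold HausDist. apply le_lub. left. reflexivity.
Qed.

Lemma ii_to_iii :
  (forall r1 r2, 0 < r1 < r0 -> 0 < r2 < r0 ->
     Rbar_le (HausDist X d (sublevel f r1) (sublevel f r2)) (Finite (k * Rabs (phi r1 - phi r2)))) ->
  forall x, Rbar_lt (Finite 0) (f x) -> Rbar_lt (f x) (Finite r0) ->
    Rbar_le (Finite (/ k)) (strong_slope X d g x).
Proof.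
  intros Hii x H0 H1.
  destruct (f x) as [r| |] eqn:Hx; simpl in H0, H1; try contradiction.
  apply (SL x r Hx (conj H0 H1)). intros eta Heta.
  destruct (phi_left r0 phi HK r (conj H0 H1) eta Heta) as [u [Hu Hu2]].
  assert (Hpu : phi u < phi r) by (apply (phi_incr r0); auto; lra).
  exists (phi r - phi u). split. lra. intros e' He'.
  assert (Hh := Hii r u (conj H0 H1) (ltac:(lra) : 0 < u < r0)).
  rewrite Rabs_right in Hh by lra.
  assert (Hs : sublevel f r x) by (unfold sublevel; rewrite Hx; simpl; lra).
  pose proof (sub_le_haus _ (sublevel f u) x Hs) as Hd.
  assert (Hlt : Rbar_lt (distX X d x (sublevel f u)) (Finite (k * (phi r - phi u) + e'))).
  { apply Rbar_le_lt_trans with (Finite (k * (phi r - phi u))). eapply Rbar_le_trans; eauto. simpl. lra. }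
  destruct (distX_lt X d x _ _ Hlt) as [z [Hz Hdz]].
  exists z. split; auto. replace (phi r - (phi r - phi u)) with (phi u) by ring.
  apply (lvl2 X f r0 phi HK); auto. lra.
Qed.

Hypothesis H3 : forall x, Rbar_lt (Finite 0) (f x) -> Rbar_lt (f x) (Finite r0) ->
           Rbar_le (Finite (/ k)) (strong_slope X d g x).

Lemma one_sided s t x : 0 < s < r0 -> 0 < t < r0 -> sublevel f s x ->
  Rbar_le (distX X d x (sublevel f t)) (Finite (k * Rabs (phi s - phi t))).
Proof.
  intros Hs Ht Hx.
  assert (Hnn : 0 <= k * Rabs (phi s - phi t)) by (apply Rmult_le_pos; [lra| apply Rabs_pos]).
  destruct (classic (Rbar_le (f x) (Finite t))) as [Hle|Hnle].
  - eapply Rbar_le_trans. apply (distX_mem X d Hmet). exact Hle. simpl. exact Hnn.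
  - apply Rbar_not_le_lt in Hnle. unfold sublevel in Hx.
    destruct (f x) as [u| |] eqn:Hfx; simpl in Hx, Hnle; try contradiction.
    assert (Hgx : g x = Finite (phi u)) by (apply (g_fin X f r0 phi x u Hfx); lra).
    assert (Hpt : 0 < phi t) by (apply (phi_pos r0); auto).
    assert (Htu : phi t < phi u) by (apply (phi_incr r0); auto; lra).
    assert (Hus : phi u <= phi s) by (apply (phi_le r0); auto; lra).
    apply distX_le. intros e He.
    destruct (EB_main X d Hmet Hcomp f Hf Hlsc r0 k Hk phi HK H3 x (phi u) (phi t) e Hgx (conj Hpt Htu) He)
      as [z [Hz Hdz]].
    exists z. split.
    + apply (lvl X f r0 phi HK); auto. lra.
    + assert (k * (phi u - phi t) <= k * Rabs (phi s - phi t)).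
      { apply Rmult_le_compat_l. lra. rewrite Rabs_right; lra. }
      lra.
Qed.

Lemma iii_to_ii : forall r1 r2, 0 < r1 < r0 -> 0 < r2 < r0 ->
     Rbar_le (HausDist X d (sublevel f r1) (sublevel f r2)) (Finite (k * Rabs (phi r1 - phi r2))).
Proof.
  intros r1 r2 H1 H2. apply lub_le. intros s [-> | ->]; apply lub_le; intros t [x [Hx ->]].
  - apply one_sided; auto.
  - rewrite Rabs_minus_sym. apply one_sided; auto.
Qed.

Lemma iii_to_i (V : X -> R -> Prop) : (forall x y, V x y -> 0 < y) ->
  metric_regular_on X d (epi_map phi r0 f) k V.
Proof.
  intros HV xb yb _ HVb. pose proof (HV _ _ HVb) as Hyb.
  exists 1, (yb / 2). split. lra. split. lra.
  intros x y _ Hy. apply Rabs_def2 in Hy.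
  assert (Hgm := g_not_minf X f Hf r0 phi x). fold g in Hgm.
  unfold epi_map. fold g.
  destruct (g x) as [c| |] eqn:Hgx; try contradiction.
  - assert (Hdr0 : Rbar_le (Finite 0) (distR y (fun t => Rbar_le (Finite c) (Finite t)))).
    { apply le_glb. intros v [z [_ ->]]. simpl. apply Rabs_pos. }
    destruct (Rle_or_lt c y) as [Hcy|Hcy].
    + eapply Rbar_le_trans. apply (distX_mem X d Hmet). fold g. rewrite Hgx. simpl; auto.
      pose proof (mult_ge k _ _ Hk Hdr0). rewrite Rmult_0_r in H. exact H.
    + apply Rbar_le_trans with (Finite (k * (c - y))).
      * apply distX_le. intros e He.
        destruct (EB_main X d Hmet Hcomp f Hf Hlsc r0 k Hk phi HK H3 x c y e Hgx (conj (ltac:(lra) : 0 < y) Hcy) He)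
          as [z [Hz Hdz]].
        exists z. split; auto.
      * apply mult_ge; auto. apply le_glb. intros v [z [Hz ->]]. simpl in Hz |- *.
        rewrite Rabs_left1; lra.
  - assert (Hd : distR y (fun t => Rbar_le p_infty (Finite t)) = p_infty).
    { assert (Rbar_le p_infty (distR y (fun t => Rbar_le p_infty (Finite t)))).
      { apply le_glb. intros v [z [Hz _]]. simpl in Hz. contradiction. }
      destruct (distR _ _); simpl in H; try contradiction; auto. }
    rewrite Hd, (mult_pinf k Hk). destruct (distX _ _ _ _); simpl; auto.
Qed.

End Final.

Theorem corollary2p4 (X : Type) (d : X -> X -> R)
  (Hmet : is_metric X d) (Hcomp : complete_metric X d)
  (f : X -> Rbar) (Hf : no_minus_infty X f) (Hlsc : lsc X d f)
  (r0 k : R) (Hr0 : 0 < r0) (Hk : 0 < k)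
  (phi : R -> R) (HK : in_K r0 phi)
  (phir0 : Rbar) (Hphir0 : left_limit_at phi r0 phir0) :
  let V := fun x y => Rbar_lt (Finite 0) (f x) /\ Rbar_lt (f x) (Finite r0) /\
                      0 < y /\ Rbar_lt (Finite y) phir0 in
  ((metric_regular_on X d (epi_map phi r0 f) k V)
    <-> (forall r1 r2, 0 < r1 < r0 -> 0 < r2 < r0 ->
           Rbar_le (HausDist X d (sublevel f r1) (sublevel f r2))
                   (Finite (k * Rabs (phi r1 - phi r2))))) /\
  ((forall r1 r2, 0 < r1 < r0 -> 0 < r2 < r0 ->
           Rbar_le (HausDist X d (sublevel f r1) (sublevel f r2))
                   (Finite (k * Rabs (phi r1 - phi r2))))
    <-> (forall x, Rbar_lt (Finite 0) (f x) -> Rbar_lt (f x) (Finite r0) ->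
           Rbar_le (Finite (/ k)) (strong_slope X d (phi_comp phi r0 f) x))).
Proof.
  intros V. split; split.
  - intros Hi. eapply iii_to_ii; eauto.
    eapply i_to_iii; eauto.
  - intros Hii. eapply iii_to_i; eauto.
    eapply ii_to_iii; eauto.
    intros x y [_ [_ [Hy _]]]. exact Hy.
  - intros Hii. eapply ii_to_iii; eauto.
  - intros Hiii. eapply iii_to_ii; eauto.
Qed.
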